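(* Consider a finite Markov chain on a set $Q$ of states with $|Q|=n$. Let $x$ denote the smallest nonzero transition probability of the chain. Let $p\in Q$ and $S\subseteq Q$. For runs starting in $p$, define $T=k$ if the run hits a state of $S$ for the first time after exactly $k$ steps, and let $T$ be undefined if the run never hits $S$. Then $\mathcal{P}(T\ge k)\le 2c^k$ for all $k\ge n$, where $c:=\exp(-x^n/n)$.
   Context: $\mathcal{P}(T\ge k)$ denotes the probability of the set of runs from $p$ for which $T$ is defined and $T\ge k$. *)

(* Defs.v *)
From HB Require Import structures.
From mathcomp Require Import all_boot all_order all_algebra.
From mathcomp Require Import all_classical all_reals all_analysis.
Set Implicit Arguments. Unset Strict Implicit. Unset Printing Implicit Defensive.
Import Order.TTheory GRing.Theory Num.Theory.
Local Open Scope ring_scope.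

Definition stochastic (R : realType) (Q : finType) (P : Q -> Q -> R) : Prop :=
  (forall q r, 0 <= P q r) /\ (forall q, \sum_(r : Q) P q r = 1).

(* smallest nonzero transition probability (all probabilities are <= 1, so 1
   is a neutral start value for min) *)
Definition min_nonzero_prob (R : realType) (Q : finType) (P : Q -> Q -> R) : R :=
  \big[Num.min/1]_(qr : Q * Q | P qr.1 qr.2 != 0) P qr.1 qr.2.

(* Probability of the set of runs from p with T = j, i.e. runs whose first
   visit to S happens at step exactly j: the sum, over all paths
   f 0 = p, f 1, ..., f j with f i \notin S for i < j and f j \in S, of the
   product of the transition probabilities along the path. *)
Definition first_hit_prob (R : realType) (Q : finType) (P : Q -> Q -> R)
    (S : {set Q}) (p : Q) (j : nat) : R :=
  \sum_(f : {ffun 'I_j.+1 -> Q} |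
          [&& f ord0 == p, f ord_max \in S &
              [forall i : 'I_j.+1, (i < j)%N ==> (f i \notin S)]])
    \prod_(i < j) P (f (inord i)) (f (inord i.+1)).

(* Main.v *)
Require Import Defs.
From HB Require Import structures.
From mathcomp Require Import all_boot all_order all_algebra.
From mathcomp Require Import all_classical all_reals all_analysis.
From mathcomp Require Import lra zify.
Import Order.TTheory GRing.Theory Num.Theory.
Local Open Scope ring_scope.

Lemma final_ineq (R : realType) (y : R) (n k a : nat) :
  0 <= y -> y <= 1 -> (0 < n)%N -> (0 < a)%N -> (k < a.+1 * n)%N ->
  (1 - y) ^+ a <= 2 * expR (- y / n%:R) ^+ k.
Proof.
move=> y0 y1 n0 a0 kn.
have e1 : 1 - y <= expR (- y) by have := expR_ge1Dx (- y).
have e2 : 1 - y <= 2 * expR (- (2 * y)).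
  have -> : - (2 * y) = 4%:R * (- y / 2) by lra.
  rewrite expRM_natl.
  have h4 : (1 - y / 2) ^+ 4 <= expR (- y / 2) ^+ 4.
    apply: lerXn2r; rewrite ?nnegrE ?expR_ge0 //; first lra.
    by have := expR_ge1Dx (- y / 2); rewrite mulNr.
  apply: le_trans (_ : 2 * (1 - y / 2) ^+ 4 <= _); last by rewrite ler_wpM2l.
  have s1 := sqr_ge0 ((1 - y/2) ^+ 2 - 1/2).
  have s2 := sqr_ge0 ((1 - y/2) - 1/2).
  rewrite !expr2 in s1 s2 *. rewrite (_ : 4 = 2 + 2)%N // exprD !expr2. nra.
have ha : a = a.-1.+1 by rewrite prednK.
rewrite ha exprS.
apply: le_trans (_ : 2 * expR (- (2 * y)) * expR (- y) ^+ a.-1 <= _).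
  apply: ler_pM => //; first lra.
    by apply: exprn_ge0; lra.
  by apply: lerXn2r; rewrite ?nnegrE ?expR_ge0 //; lra.
rewrite -mulrA ler_wpM2l // -expRM_natl -expRM_natl -expRD ler_expR.
have nR : 0 < n%:R :> R by rewrite ltr0n.
have kR : k%:R <= (a.+1 * n)%:R :> R by rewrite ler_nat ltnW.
rewrite natrM in kR.
have H1 : k%:R * y / n%:R <= a.+1%:R * y.
  rewrite ler_pdivrMr //.
  have : k%:R * y <= a.+1%:R * n%:R * y by apply: ler_wpM2r.
  nra.
have H2 : a.+1%:R = 2 + a.-1%:R :> R by rewrite {1}ha -addn2 natrD addrC.
rewrite H2 in H1.
have -> : k%:R * (- y / n%:R) = - (k%:R * y / n%:R) by rewrite mulNr mulrN mulrA.
lra.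
Qed.

Set Implicit Arguments. Unset Strict Implicit. Unset Printing Implicit Defensive.

Definition fcons (Q : finType) m (a : Q) (g : {ffun 'I_m -> Q}) : {ffun 'I_m.+1 -> Q} :=
  [ffun i => if unlift ord0 i is Some i' then g i' else a].
Definition ftail (Q : finType) m (f : {ffun 'I_m.+1 -> Q}) : {ffun 'I_m -> Q} :=
  [ffun i => f (lift ord0 i)].

Lemma fcons0 (Q : finType) m (a : Q) (g : {ffun 'I_m -> Q}) : fcons a g ord0 = a.
Proof. by rewrite ffunE unlift_none. Qed.

Lemma fconsS (Q : finType) m (a : Q) (g : {ffun 'I_m -> Q}) i : fcons a g (lift ord0 i) = g i.
Proof. by rewrite ffunE liftK. Qed.

Lemma sum_ffunS (R : realType) (Q : finType) m (F : {ffun 'I_m.+1 -> Q} -> R) :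
  \sum_(f : {ffun 'I_m.+1 -> Q}) F f = \sum_(a : Q) \sum_(g : {ffun 'I_m -> Q}) F (fcons a g).
Proof.
rewrite pair_big /=.
rewrite (reindex (fun ag : Q * {ffun 'I_m -> Q} => fcons ag.1 ag.2)) //=.
exists (fun f : {ffun 'I_m.+1 -> Q} => (f ord0, ftail f)).
  by case=> a g _ /=; rewrite fcons0; congr pair; apply/ffunP=> i; rewrite ffunE fconsS.
move=> f _ /=; apply/ffunP=> i; case: (unliftP ord0 i) => [j ->|->].
  by rewrite fconsS ffunE.
by rewrite fcons0.
Qed.

Lemma inordS m i : (i <= m)%N -> (inord i.+1 : 'I_m.+2) = lift ord0 (inord i : 'I_m.+1).
Proof. by move=> him; apply/val_inj; rewrite /= /bump /= !inordK. Qed.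

Lemma inord0 m : (inord 0 : 'I_m.+1) = ord0.
Proof. by apply/val_inj; rewrite /= inordK. Qed.

Lemma ordmaxS m : (ord_max : 'I_m.+2) = lift ord0 (ord_max : 'I_m.+1).
Proof. by apply/val_inj. Qed.

Lemma prod_fcons (R : realType) (Q : finType) (P : Q -> Q -> R) j (a : Q)
  (g : {ffun 'I_j.+1 -> Q}) :
  \prod_(i < j.+1) P (fcons a g (inord i)) (fcons a g (inord i.+1)) =
  P a (g ord0) * \prod_(i < j) P (g (inord i)) (g (inord i.+1)).
Proof.
rewrite big_ord_recl inord0 fcons0 (inordS (leq0n _)) fconsS inord0; congr (_ * _).
apply: eq_bigr => i _; rewrite lift0 inordS; last by apply: ltnW.
rewrite inordS ?fconsS //.
Qed.

Definition eS (R : realType) (Q : finType) (S : {set Q}) : Q -> R :=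
  fun q => if q \in S then 1 else 0.
Definition Top (R : realType) (Q : finType) (P : Q -> Q -> R) (S : {set Q})
  (f : Q -> R) : Q -> R := fun q => if q \in S then 0 else \sum_r P q r * f r.

Lemma cond_fcons (Q : finType) (S : {set Q}) (p : Q) j a (g : {ffun 'I_j.+1 -> Q}) :
  [&& fcons a g ord0 == p, fcons a g ord_max \in S &
     [forall i : 'I_j.+2, (i < j.+1)%N ==> (fcons a g i \notin S)]] =
  [&& a == p, a \notin S, g ord_max \in S &
     [forall i : 'I_j.+1, (i < j)%N ==> (g i \notin S)]].
Proof.
rewrite fcons0 ordmaxS fconsS.
have -> : [forall i : 'I_j.+2, (i < j.+1)%N ==> (fcons a g i \notin S)] =
    (a \notin S) && [forall i : 'I_j.+1, (i < j)%N ==> (g i \notin S)].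
  apply/forallP/andP.
    move=> H; split; first by have := H ord0; rewrite fcons0.
    by apply/forallP => i; have := H (lift ord0 i); rewrite fconsS lift0.
  case=> Ha /forallP H i; case: (unliftP ord0 i) => [i' ->|->].
    by rewrite fconsS lift0; apply: H.
  by rewrite fcons0.
by case: (a == p); case: (a \in S); case: (g ord_max \in S).
Qed.

Lemma fhp0 (R : realType) (Q : finType) (P : Q -> Q -> R) S p :
  first_hit_prob P S p 0 = eS R S p.
Proof.
rewrite /first_hit_prob big_mkcond sum_ffunS /=.
have E : forall a (g : {ffun 'I_0 -> Q}), fcons a g = [ffun => a].
  by move=> a g; apply/ffunP => i; rewrite !ffunE; case: (unliftP ord0 i) => [[]|].
under eq_bigr => a _ do (under eq_bigr => g _ do rewrite E).
under eq_bigr => a _ do rewrite sumr_const card_ffun card_ord expn0 !ffunE big_ord0.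
rewrite (bigD1 p) //= big1 ?addr0.
  have -> : [forall i : 'I_1, (i < 0)%N ==> (p \notin S)] = true.
    by apply/forallP => i.
  by rewrite eqxx /eS; case: (p \in S).
by move=> a /negbTE ->.
Qed.

Lemma fhpS (R : realType) (Q : finType) (P : Q -> Q -> R) S p j :
  first_hit_prob P S p j.+1 = Top P S (first_hit_prob P S ^~ j) p.
Proof.
rewrite /first_hit_prob big_mkcond sum_ffunS /=.
under eq_bigr => a _ do (under eq_bigr => g _ do rewrite cond_fcons prod_fcons).
rewrite (bigD1 p) //= [X in _ + X]big1 ?addr0; last first.
  by move=> a /negbTE ->; apply: big1 => g _.
rewrite /Top; case: (p \in S) => /=.
  by apply: big1 => g _; rewrite andbF.
rewrite eqxx /=.
under [RHS]eq_bigr => r _ do rewrite big_distrr big_mkcond /=.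
rewrite exchange_big /=; apply: eq_bigr => g _.
rewrite (bigD1 (g ord0)) //= [X in _ + X]big1 ?addr0.
  by rewrite eqxx /=; case: ifP; rewrite ?mulr0.
by move=> r /negbTE; rewrite eq_sym => ->; rewrite /=.
Qed.

Lemma fhp_iter (R : realType) (Q : finType) (P : Q -> Q -> R) S j :
  first_hit_prob P S ^~ j = iter j (Top P S) (eS R S).
Proof.
elim: j => [|j IH]; apply: boolp.funext => p; first by rewrite fhp0.
by rewrite fhpS IH.
Qed.

Section Chain.
Variables (R : realType) (Q : finType) (P : Q -> Q -> R) (S : {set Q}).
Hypothesis hP : stochastic P.

Local Notation T := (Top P S).
Local Notation e := (eS R S).
Definition one : Q -> R := fun _ => 1.

Lemma P_ge0 q r : 0 <= P q r. Proof. by case: hP. Qed.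
Lemma P_sum q : \sum_r P q r = 1. Proof. by case: hP. Qed.

Lemma T_add f g q : T (fun r => f r + g r) q = T f q + T g q.
Proof.
rewrite /Top; case: ifP => _; first by rewrite addr0.
by rewrite -big_split; apply: eq_bigr => r _; rewrite mulrDr.
Qed.

Lemma T_scale c f q : T (fun r => c * f r) q = c * T f q.
Proof.
rewrite /Top; case: ifP => _; first by rewrite mulr0.
by rewrite mulr_sumr; apply: eq_bigr => r _; rewrite mulrCA.
Qed.

Lemma T_ge0 f : (forall r, 0 <= f r) -> forall q, 0 <= T f q.
Proof.
move=> H q; rewrite /Top; case: ifP => _ //.
by apply: sumr_ge0 => r _; apply: mulr_ge0; [apply: P_ge0|apply: H].
Qed.

Lemma T_le f g : (forall r, f r <= g r) -> forall q, T f q <= T g q.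
Proof.
move=> H q; rewrite /Top; case: ifP => _ //.
by apply: ler_sum => r _; apply: ler_wpM2l; [apply: P_ge0|apply: H].
Qed.

Lemma T_one q : T one q = if q \in S then 0 else 1.
Proof.
rewrite /Top; case: ifP => _ //.
by rewrite -(P_sum q); apply: eq_bigr => r _; rewrite /one mulr1.
Qed.

Lemma iter_ge0 j f : (forall r, 0 <= f r) -> forall q, 0 <= iter j T f q.
Proof. by move=> H; elim: j => [|j IH] q //=; apply: T_ge0. Qed.

Lemma iter_le j f g : (forall r, f r <= g r) -> forall q, iter j T f q <= iter j T g q.
Proof. by move=> H; elim: j => [|j IH] q //=; apply: T_le. Qed.

Lemma iter_add j f g q :
  iter j T (fun r => f r + g r) q = iter j T f q + iter j T g q.
Proof.
elim: j q => [|j IH] q //=.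
have -> : iter j T (fun r => f r + g r) = (fun r => iter j T f r + iter j T g r).
  by apply: boolp.funext => r; apply: IH.
by rewrite T_add.
Qed.

Lemma iter_scale j c f q : iter j T (fun r => c * f r) q = c * iter j T f q.
Proof.
elim: j q => [|j IH] q //=.
have -> : iter j T (fun r => c * f r) = (fun r => c * iter j T f r).
  by apply: boolp.funext => r; apply: IH.
by rewrite T_scale.
Qed.

Fixpoint u (M : nat) : Q -> R :=
  if M is M'.+1 then fun q => e q + T (u M') q else e.

Lemma e_ge0 q : 0 <= e q. Proof. by rewrite /eS; case: ifP. Qed.

Lemma u_succ M q : u M.+1 q = u M q + iter M.+1 T e q.
Proof.
elim: M q => [|M IH] q //.
change (e q + T (u M.+1) q = u M.+1 q + T (iter M.+1 T e) q).
rewrite {1}(boolp.funext IH) T_add addrA //.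
Qed.

Lemma u_ge0 M q : 0 <= u M q.
Proof.
elim: M q => [|M IH] q /=; first exact: e_ge0.
by apply: addr_ge0; [apply: e_ge0|apply: T_ge0].
Qed.

Lemma one_u M q : iter M.+1 T one q + u M q = 1.
Proof.
elim: M q => [|M IH] q.
  by rewrite /= T_one /eS; case: ifP => _; rewrite ?add0r ?addr0.
rewrite [u _ q]/= [iter _ _ _ _]/= addrCA -T_add.
have -> : (fun r => iter M.+1 T one r + u M r) = one.
  by apply: boolp.funext => r; apply: IH.
by rewrite T_one /eS; case: ifP => _; rewrite ?add0r ?addr0.
Qed.

Lemma u_le1 M q : u M q <= 1.
Proof.
rewrite -(one_u M q) lerDr; apply: iter_ge0 => r; rewrite /one ler01 //.
Qed.

Definition x := min_nonzero_prob P.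

Lemma x_ge0 : 0 <= x.
Proof.
rewrite /x /min_nonzero_prob; apply: le_bigmin => // [[q r]] _; exact: P_ge0.
Qed.

Lemma x_le1 : x <= 1.
Proof. exact: bigmin_le_id. Qed.

Lemma x_le q r : P q r != 0 -> x <= P q r.
Proof.
move=> H; rewrite /x /min_nonzero_prob.
exact: (bigmin_le_cond _ (j := (q, r)) (fun qr => P qr.1 qr.2)).
Qed.

Lemma u_low M q : u M q != 0 -> x ^+ M <= u M q.
Proof.
elim: M q => [|M IH] q /=.
  by rewrite /eS expr0; case: ifP => _; rewrite ?eqxx.
rewrite /Top /eS; case: ifP => qS.
  by rewrite addr0 => _; apply: exprn_ile1; [apply: x_ge0|apply: x_le1].
rewrite add0r => H.
have [r Hr] : exists r, P q r * u M r != 0.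
  apply/existsP; apply: contraR H => /existsPn H.
  by apply/eqP; apply: big1 => r _; move/negbNE/eqP: (H r).
rewrite (bigD1 r) //=.
apply: le_trans (_ : P q r * u M r <= _); last first.
  rewrite lerDl; apply: sumr_ge0 => i _; apply: mulr_ge0; [apply: P_ge0|apply: u_ge0].
rewrite mulf_eq0 negb_or in Hr; case/andP: Hr => H1 H2.
rewrite exprS; apply: ler_pM; [apply: x_ge0|apply: exprn_ge0; apply: x_ge0| |].
  exact: x_le.
exact: IH.
Qed.

Definition Z M : {set Q} := [set q | u M q == 0].

Lemma Z_char M q :
  (q \in Z M.+1) = (q \notin S) && [forall r, (P q r == 0) || (r \in Z M)].
Proof.
rewrite !inE /= /Top /eS; case: ifP => qS /=.
  by rewrite addr0 oner_eq0.
rewrite add0r; apply/eqP/forallP.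
  move=> H r.
  have Hn : forall i, true -> 0 <= P q i * u M i.
    by move=> i _; apply: mulr_ge0; [apply: P_ge0|apply: u_ge0].
  have := psumr_eq0P Hn H (i := r) isT.
  by move/eqP; rewrite mulf_eq0 inE.
move=> H; apply: big1 => r _; case/orP: (H r) => [/eqP ->|]; first by rewrite mul0r.
by rewrite inE => /eqP ->; rewrite mulr0.
Qed.

Lemma Z_sub M : Z M.+1 \subset Z M.
Proof.
apply/fintype.subsetP => q; rewrite !inE u_succ => H.
have h1 := u_ge0 M q; have h2 : 0 <= iter M.+1 T e q by apply: iter_ge0; apply: e_ge0.
move/eqP: H => H; apply/eqP; apply/eqP; rewrite eq_le h1 andbT.
by rewrite -H lerDl.
Qed.

Lemma Z_stab M : Z M.+1 = Z M -> Z M.+2 = Z M.+1.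
Proof.
move=> E; apply/setP => q; rewrite [LHS]Z_char [RHS]Z_char E //.
Qed.

Lemma Z_from i : Z i.+1 = Z i -> forall j, (i <= j)%N -> Z j = Z i.
Proof.
move=> E.
have H : forall d, Z (i + d).+1 = Z (i + d).
  by elim=> [|d IH]; rewrite ?addn0 // addnS; apply: Z_stab.
have H2 : forall d, Z (i + d) = Z i.
  by elim=> [|d IH]; rewrite ?addn0 // addnS H.
by move=> j /subnKC <-; apply: H2.
Qed.

Lemma Z_mono a b : (a <= b)%N -> Z b \subset Z a.
Proof.
move/subnKC <-; elim: (b - a)%N => [|d IH]; first by rewrite addn0.
by rewrite addnS; exact: (fintype.subset_trans (Z_sub _) IH).
Qed.

Lemma Z_exists : (0 < #|Q|)%N -> exists2 i, (i < #|Q|)%N & Z i.+1 = Z i.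
Proof.
move=> n0.
case: (boolP [exists i : 'I_#|Q|, Z i.+1 == Z i]) => [/existsP [i /eqP E]|/existsPn H].
  by exists i.
exfalso.
have Hc : forall i, (i <= #|Q|)%N -> (#|Z i| + i <= #|Z 0|)%N.
  elim=> [|i IH] hi; first by rewrite addn0.
  have hi' : (i < #|Q|)%N := hi.
  have Ne := H (Ordinal hi').
  have : Z i.+1 \proper Z i by rewrite finset.properEneq Ne Z_sub.
  move/proper_card => lt; have := IH (ltnW hi); lia.
case: (boolP (Z 0 == [set: Q])) => [/eqP Z0|Z0].
  have E : Z 1 = Z 0.
    apply/setP => q; rewrite Z_char Z0 inE.
    have : q \in Z 0 by rewrite Z0 inE.
    rewrite inE /= /eS; case: ifP => qS /=; first by rewrite oner_eq0.
    by move=> _; apply/forallP => r; rewrite inE orbT.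
  by have := H (Ordinal n0); rewrite /= E eqxx.
have : Z 0 \proper [set: Q] by rewrite finset.properT.
move/proper_card; rewrite cardsT => lt.
have := Hc #|Q| (leqnn _); lia.
Qed.

Lemma Zn_eq : (0 < #|Q|)%N -> Z #|Q| = Z #|Q|.-1.
Proof.
move=> n0; have [i hi E] := Z_exists n0.
rewrite (Z_from E (ltnW hi)) (Z_from E) //; lia.
Qed.

Lemma Zs_sub M : (0 < #|Q|)%N -> Z #|Q|.-1 \subset Z M.
Proof.
move=> n0; case: (leqP M #|Q|.-1) => h; first exact: Z_mono.
have [i hi E] := Z_exists n0.
rewrite (Z_from E (_ : (i <= M)%N)) ?(Z_from E (_ : (i <= #|Q|.-1)%N)) //; lia.
Qed.

Definition good (g : Q -> R) (m : R) :=
  (forall q, 0 <= g q /\ g q <= m) /\ (forall q, q \in Z #|Q|.-1 -> g q = 0).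

Lemma T_good g m : (0 < #|Q|)%N -> 0 <= m -> good g m -> good (T g) m.
Proof.
move=> n0 m0 [H1 H2]; split.
  move=> q; split; first by apply: T_ge0 => r; case: (H1 r).
  apply: le_trans (_ : T (fun r => m * one r) q <= _).
    by apply: T_le => r; rewrite /one mulr1; case: (H1 r).
  rewrite T_scale T_one; case: ifP => _; rewrite ?mulr0 ?mulr1 //.
move=> q; rewrite -{1}(Zn_eq n0) -{1}(prednK n0) Z_char => /andP [qS /forallP Hr].
rewrite /Top (negbTE qS); apply: big1 => r _.
by case/orP: (Hr r) => [/eqP ->|/H2 ->]; rewrite ?mul0r ?mulr0.
Qed.

Lemma iter_good j g m : (0 < #|Q|)%N -> 0 <= m -> good g m -> good (iter j T g) m.
Proof. by move=> n0 m0 Hg; elim: j => [|j IH] //=; apply: T_good. Qed.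

Lemma block g m q : (0 < #|Q|)%N -> 0 <= m -> good g m ->
  iter #|Q| T g q <= (1 - x ^+ #|Q|) * m.
Proof.
move=> n0 m0 Hg.
have y1 : x ^+ #|Q| <= 1 by apply: exprn_ile1; [apply: x_ge0|apply: x_le1].
case: (boolP (q \in Z #|Q|.-1)) => qZ.
  have [_ H] := iter_good #|Q| n0 m0 Hg; rewrite H //.
  by apply: mulr_ge0 => //; rewrite subr_ge0.
apply: le_trans (_ : iter #|Q| T (fun r => m * one r) q <= _).
  by apply: iter_le => r; rewrite /one mulr1; case: Hg => H _; case: (H r).
rewrite iter_scale mulrC; apply: ler_wpM2r => //.
have := one_u #|Q|.-1 q; rewrite prednK // => E.
have : u #|Q|.-1 q != 0 by move: qZ; rewrite inE.
move/u_low => h.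
have h2 : x ^+ #|Q| <= x ^+ #|Q|.-1.
  apply: ler_wiXn2l; [apply: x_ge0|apply: x_le1|lia].
lra.
Qed.

Lemma blocks g a : (0 < #|Q|)%N -> good g 1 ->
  good (iter (a * #|Q|) T g) ((1 - x ^+ #|Q|) ^+ a).
Proof.
move=> n0 Hg.
have y1 : x ^+ #|Q| <= 1 by apply: exprn_ile1; [apply: x_ge0|apply: x_le1].
have y0 : 0 <= 1 - x ^+ #|Q| by rewrite subr_ge0.
elim: a => [|a IH]; first by rewrite mul0n expr0.
have m0 : 0 <= (1 - x ^+ #|Q|) ^+ a by apply: exprn_ge0.
rewrite mulSn iterD; split; last by case: (iter_good #|Q| n0 m0 IH).
move=> q; split; first by case: (iter_good #|Q| n0 m0 IH) => H _; case: (H q).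
by rewrite exprS; apply: block.
Qed.

Lemma partial k M p :
  \sum_(k <= j < k + M.+1) iter j T e p = iter k T (u M) p.
Proof.
elim: M => [|M IH]; first by rewrite addn1 big_nat1.
rewrite addnS big_nat_recr ?leq_addr //= IH.
rewrite (_ : (fun q => e q + T (u M) q) = (fun q => u M q + iter M.+1 T e q));
  last exact: (boolp.funext (u_succ M)).
by rewrite iter_add iterD.
Qed.

Lemma u_good M : (0 < #|Q|)%N -> good (u M) 1.
Proof.
move=> n0; split; first by move=> q; split; [apply: u_ge0|apply: u_le1].
move=> q /(fintype.subsetP (Zs_sub M n0)); rewrite inE => /eqP //.
Qed.

Lemma partial_bound k M p : (0 < #|Q|)%N ->
  \sum_(k <= j < k + M.+1) iter j T e p <= (1 - x ^+ #|Q|) ^+ (k %/ #|Q|).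
Proof.
move=> n0; rewrite partial.
have -> : iter k T (u M) p = iter (k %/ #|Q| * #|Q|) T (iter (k %% #|Q|) T (u M)) p.
  by rewrite -iterD -divn_eq.
have Hg : good (iter (k %% #|Q|) T (u M)) 1 by apply: iter_good => //; apply: u_good.
by case: (blocks (k %/ #|Q|) n0 Hg) => H _; case: (H p).
Qed.
End Chain.

Lemma fhp_iter_p (R : realType) (Q : finType) (P : Q -> Q -> R) S p j :
  first_hit_prob P S p j = iter j (Top P S) (eS R S) p.
Proof. exact: (congr1 (fun f => f p) (fhp_iter P S j)). Qed.

Theorem mainTheorem3 (R : realType) (Q : finType) (P : Q -> Q -> R)
    (hP : stochastic P) (p : Q) (S : {set Q}) (k : nat) :
  (#|Q| <= k)%N ->
  (\sum_(k <= j <oo) (first_hit_prob P S p j)%:E <=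
   (2 * (expR (- (min_nonzero_prob P) ^+ #|Q| / #|Q|%:R)) ^+ k)%:E)%E.
Proof.
move=> kn.
have n0 : (0 < #|Q|)%N by apply/card_gt0P; exists p.
have x0 := x_ge0 hP; have x1 := x_le1 P.
have y0 : 0 <= min_nonzero_prob P ^+ #|Q| by apply: exprn_ge0.
have y1 : min_nonzero_prob P ^+ #|Q| <= 1 by apply: exprn_ile1.
apply: lime_le.
  by apply: is_cvg_nneseries => j _ _; rewrite lee_fin fhp_iter_p; apply: iter_ge0 => //; apply: e_ge0.
apply: nearW => N.
rewrite sumEFin lee_fin.
case: (leqP N k) => hN.
  rewrite big_geq //; apply: mulr_ge0 => //; apply: exprn_ge0; apply: expR_ge0.
have -> : N = (k + (N - k).-1.+1)%N by lia.
under eq_bigr => j _ do rewrite fhp_iter_p.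
apply: le_trans (partial_bound S hP k _ p n0) _.
have a0 : (0 < k %/ #|Q|)%N by rewrite divn_gt0.
have := final_ineq _ _ _ _ _ y0 y1 n0 a0 (ltn_ceil k n0).
done.
Qed.
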